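(* Let $\Gamma=(G,\sigma)$, $G=(V,E)$, be a connected signed graph. Then there exists a real symmetric matrix $M$ compatible with $\Gamma$ such that the smallest eigenvalue $\lambda_1$ of $M$ is simple and a corresponding eigenfunction $f_1$ is nonzero at every vertex. In particular, $\mathfrak{S}(f_1)=1$ and the strong nodal domain of $f_1$ is the whole graph $G$.
   Context: A signed graph $\Gamma=(G,\sigma)$ is a finite simple undirected graph $G=(V,E)$ with $\sigma:E\to\{+1,-1\}$. The induced signed graph of a real symmetric $n\times n$ matrix $M$ has vertices $x_1,\dots,x_n$, edge $\{x_i,x_j\}$ iff $i\ne j$ and $M_{ij}\ne0$, sign $-M_{ij}/|M_{ij}|$; $M$ is compatible with $\Gamma$ if its induced signed graph is $\Gamma$. A walk is $y_1,\dots,y_m$ ($m\ge2$) with consecutive vertices adjacent; for $f:V\to\mathbb R$ an S-walk is a walk with $f(y_j)\sigma_{y_jy_{j+1}}f(y_{j+1})>0$ for all $j$. The strong nodal domains of $f$ are the induced subgraphs on the equivalence classes of the relation on $\{x:f(x)\ne0\}$ ''$x=y$ or an S-walk connects $x$ and $y$''; $\mathfrak{S}(f)$ is their number. *)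

(* Defs.v *)
From HB Require Import structures.
From mathcomp Require Import all_boot all_order all_algebra.
From mathcomp Require Import reals.
Set Implicit Arguments. Unset Strict Implicit. Unset Printing Implicit Defensive.
Import Order.TTheory GRing.Theory Num.Theory.
Local Open Scope ring_scope.

(* A signed graph on vertex set 'I_n: a simple graph given by a symmetric,
   irreflexive adjacency relation [adj], and a sign [sigma x y] in {+1,-1}
   on every edge {x,y} (symmetric; values off edges are irrelevant). *)
Definition signed_graph (R : numDomainType) (n : nat)
  (adj : rel 'I_n) (sigma : 'I_n -> 'I_n -> R) : Prop :=
  [/\ forall x, ~~ adj x x,
      forall x y, adj x y = adj y x,
      forall x y, adj x y -> sigma x y = sigma y x &
      forall x y, adj x y -> sigma x y = 1 \/ sigma x y = -1].

Definition connected_graph (n : nat) (adj : rel 'I_n) : Prop :=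
  forall x y, connect adj x y.

Definition compatible (R : numFieldType) (n : nat)
  (adj : rel 'I_n) (sigma : 'I_n -> 'I_n -> R) (M : 'M[R]_n) : Prop :=
  (forall i j, i != j -> (M i j != 0) = adj i j) /\
  (forall i j, adj i j -> sigma i j = - (M i j / `|M i j|)).

Definition symmetric_mx (R : ringType) (n : nat) (M : 'M[R]_n) : Prop :=
  M^T = M.

Definition smallest_eigenvalue (R : realFieldType) (n : nat)
  (M : 'M[R]_n) (l : R) : Prop :=
  eigenvalue M l /\ forall l', eigenvalue M l' -> l <= l'.

Definition simple_eigenvalue (R : fieldType) (n : nat)
  (M : 'M[R]_n) (l : R) : Prop :=
  mup l (char_poly M) = 1%N.

Definition S_step (R : numDomainType) (n : nat)
  (adj : rel 'I_n) (sigma : 'I_n -> 'I_n -> R) (f : 'I_n -> R) : rel 'I_n :=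
  fun x y => adj x y && (0 < f x * sigma x y * f y).

Definition S_connected (R : numDomainType) (n : nat)
  (adj : rel 'I_n) (sigma : 'I_n -> 'I_n -> R) (f : 'I_n -> R) : rel 'I_n :=
  connect (S_step adj sigma f).

Definition strong_nodal_domains (R : numDomainType) (n : nat)
  (adj : rel 'I_n) (sigma : 'I_n -> 'I_n -> R) (f : 'I_n -> R) : {set {set 'I_n}} :=
  [set [set y | S_connected adj sigma f x y] | x in [set x | f x != 0]].

Definition num_strong_nodal_domains (R : numDomainType) (n : nat)
  (adj : rel 'I_n) (sigma : 'I_n -> 'I_n -> R) (f : 'I_n -> R) : nat :=
  #|strong_nodal_domains adj sigma f|.

(* Main.v *)
Require Import Defs.
From HB Require Import structures.
From mathcomp Require Import all_boot all_order all_algebra.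
From mathcomp Require Import reals.
From mathcomp Require Import ring lra.
Import Order.TTheory GRing.Theory Num.Theory.
Local Open Scope ring_scope.

Set Implicit Arguments. Unset Strict Implicit. Unset Printing Implicit Defensive.

Lemma mup_char_poly1 (F : fieldType) (n : nat) (M : 'M[F]_n.+1) (g : 'cV[F]_n.+1) :
  g 0 0 != 0 -> M *m g = 0 ->
  (forall v : 'rV_n.+1, v *m M = 0 -> v *m g = 0 -> v = 0) ->
  mup 0 (char_poly M) = 1%N.
Proof.
move=> g0 Mg0 ker.
pose U : 'M[F]_n.+1 := \matrix_(i, j) if j == 0 then g i 0 else (i == j)%:R.
pose C : 'M[{poly F}]_n.+1 :=
  \matrix_(i, j) if j == 0 then (g i 0)%:P else char_poly_mx M i j.
pose Dm : 'M[{poly F}]_n.+1 := diag_mx (\row_(j < n.+1) if j == 0 then 'X else 1).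
have eq1 : char_poly_mx M *m map_mx polyC U = C *m Dm.
  apply/matrixP => i j; rewrite !mxE.
  rewrite [RHS](bigD1 j) //= [X in _ = _ + X]big1 ?addr0; last first.
    by move=> k kj; rewrite !mxE (negPf kj) mulr0n mulr0.
  rewrite !mxE eqxx mulr1n.
  case: eqP => [-> | j0].
    have := congr1 (fun A : 'cV[F]_n.+1 => A i 0) Mg0; rewrite !mxE => Mgi.
    under eq_bigr => k _ do rewrite !mxE eqxx mulrBl -polyCM.
    rewrite sumrB -rmorph_sum /= Mgi polyC0 subr0.
    rewrite (bigD1 i) //= big1 ?addr0; last first.
      by move=> k ki; rewrite eq_sym (negPf ki) mulr0n mul0r.
    by rewrite eqxx mulr1n mulrC.
  rewrite (bigD1 j) //= big1 ?addr0; last first.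
    by move=> k kj; rewrite !mxE (introF eqP j0) (negPf kj) polyC0 mulr0.
  by rewrite !mxE (introF eqP j0) eqxx polyC1.
have detU : \det U = g 0 0.
  rewrite det_trig; last first.
    apply/is_trig_mxP => i j ij; rewrite mxE.
    have -> : (j == 0) = false by apply/negbTE; rewrite -lt0n; apply: leq_ltn_trans ij.
    by case: eqP ij => // ->; rewrite ltnn.
  rewrite big_ord_recl big1 ?mulr1; first by rewrite mxE eqxx.
  by move=> i _; rewrite mxE eqxx.
have detD : \det Dm = 'X.
  rewrite det_diag big_ord_recl big1 ?mulr1; first by rewrite mxE eqxx.
  by move=> i _; rewrite mxE.
have eq2 : char_poly M * (g 0 0)%:P = \det C * 'X.
  by rewrite -detD -det_mulmx -eq1 det_mulmx det_map_mx detU.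
pose q := \det C * ((g 0 0)^-1)%:P.
have eq3 : char_poly M = 'X * q.
  by rewrite /q mulrA [_ * \det C]mulrC -eq2 -mulrA -polyCM mulfV // polyC1 mulr1.
have qN0 : ~~ root q 0.
  rewrite /root /q hornerM hornerC mulf_eq0 invr_eq0 negb_or g0 andbT.
  have -> : (\det C).[0] = \det (map_mx (horner_eval 0) C) by rewrite det_map_mx.
  apply/negP => /det0P [v vN0 vC0]; move/eqP: vN0; apply.
  have e (j : 'I_n.+1) : (v *m (C ^ horner_eval 0)%sesqui) 0 j = 0 by rewrite vC0 mxE.
  have h1 (j : 'I_n.+1) : j != 0 -> (v *m M) 0 j = 0.
    move=> jn0; have := e j; rewrite !mxE.
    under eq_bigr => i _ do rewrite !mxE horner_evalE (negPf jn0) !hornerE hornerMn hornerX mul0rn sub0r mulrN.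
    by rewrite sumrN => /eqP; rewrite oppr_eq0 => /eqP.
  have h2 : v *m g = 0.
    apply/matrixP => a b; rewrite (ord1 a) (ord1 b) [RHS]mxE -(e 0) !mxE.
    by apply: eq_bigr => i _; rewrite !mxE eqxx /horner_eval hornerC.
  apply: ker => //; apply/matrixP => a j; rewrite (ord1 a) [RHS]mxE.
  have [->|jn0] := eqVneq j 0; last exact: h1.
  have := congr1 (fun A : 'M[F]_1 => A 0 0) (mulmxA v M g).
  rewrite Mg0 mulmx0 !mxE (bigD1 (0 : 'I_n.+1)) //= big1 ?addr0; last first.
    by move=> k kn0; rewrite h1 // mul0r.
  move/esym/eqP; rewrite mulf_eq0 (negPf g0) orbF mxE => /eqP //.
rewrite eq3 mupMl // -['X]subr0 -[X in mup _ (_ - X)]polyC0 -[_ - _]expr1 mup_XsubCX eqxx //.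
Qed.

Definition fb (R : ringType) (n : nat) (b : {ffun 'I_n -> bool}) : 'I_n -> R :=
  fun x => if b x then 1 else -1.

Lemma fb_sq (R : ringType) n (b : {ffun 'I_n -> bool}) x : fb R b x * fb R b x = 1.
Proof. by rewrite /fb; case: (b x); rewrite ?mulr1 ?mulrNN ?mulr1. Qed.

Lemma pm1_cases (R : realDomainType) (a : R) : (a = 1 \/ a = -1) -> ~~ (0 < a) -> a = -1.
Proof. by case=> -> //; rewrite ltr01. Qed.

Lemma edge_out (T : finType) (e : rel T) (C : pred T) x p :
  C x -> path e x p -> ~~ C (last x p) -> exists u v, [/\ C u, ~~ C v & e u v].
Proof.
elim: p x => [|y p IH] x Cx /=; first by rewrite Cx.
case/andP => exy pp Clast.
case Cy: (C y); first exact: IH Cy pp Clast.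
by exists x, y; rewrite Cy Cx exy.
Qed.

Lemma good_signs (R : realDomainType) (n : nat) (adj : rel 'I_n.+1)
  (sigma : 'I_n.+1 -> 'I_n.+1 -> R) :
  signed_graph adj sigma -> connected_graph adj ->
  exists b : {ffun 'I_n.+1 -> bool},
    forall x y, connect (S_step adj sigma (fb R b)) x y.
Proof.
move=> [irr adjsym sigsym sigpm] conn.
pose C (b : {ffun 'I_n.+1 -> bool}) := [set y | connect (S_step adj sigma (fb R b)) ord0 y].
have [b _ bmax] := @arg_maxnP _ [ffun=> true] predT (fun b => #|C b|) isT.
have symS : forall b, symmetric (S_step adj sigma (fb R b)).
  move=> b' x y; rewrite /S_step adjsym; case Axy: (adj y x) => //=.
  by rewrite (sigsym y x) //; congr (_ < _); ring.
suff Call : forall y, y \in C b.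
  exists b => x y; apply: (connect_trans (y := ord0)).
    by rewrite (sym_connect_sym (symS b)); have := Call x; rewrite inE.
  by have := Call y; rewrite inE.
move=> y; apply/negPn/negP => yC.
have /connectP [p pp ely] := conn ord0 y.
have [u [v [Cu Cv auv]]] : exists u v, [/\ u \in C b, v \notin C b & adj u v].
  apply: (edge_out (C := fun z => z \in C b) (x := ord0) (p := p)) => //.
    by rewrite inE connect0.
  by rewrite -ely.
pose b' : {ffun 'I_n.+1 -> bool} := [ffun z => if z \in C b then b z else ~~ b z].
have fb'E z : fb R b' z = if z \in C b then fb R b z else - fb R b z.
  by rewrite /fb ffunE; case: (z \in C b); case: (b z); rewrite ?opprK.
have key : forall q x, x \in C b -> connect (S_step adj sigma (fb R b')) ord0 x ->
    path (S_step adj sigma (fb R b)) x q ->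
    connect (S_step adj sigma (fb R b')) ord0 (last x q).
  elim => [|w q IH] x //= Cx cx /andP [sxw qp].
  have Cw : w \in C b.
    by rewrite inE; apply: connect_trans (connect1 sxw); rewrite inE in Cx.
  apply: IH => //; apply: connect_trans cx (connect1 _).
  by rewrite /S_step !fb'E Cx Cw.
have sub : C b \subset C b'.
  apply/subsetP => z; rewrite inE => /connectP [q qp ->].
  by rewrite inE; apply: key => //; rewrite inE connect0.
have : (#|C b| < #|C b'|)%N.
  apply: proper_card; apply/properP; split => //; exists v => //.
  rewrite inE; apply: connect_trans (connect1 (x := u) _).
    by have := subsetP sub u Cu; rewrite inE.
  rewrite /S_step auv /= !fb'E Cu (negPf Cv) mulrN.
  rewrite (@pm1_cases _ (fb R b u * sigma u v * fb R b v)) ?opprK ?ltr01 //.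
    rewrite /fb; case: (sigpm _ _ auv) => ->; case: (b u); case: (b v);
      rewrite ?mulr1 ?mul1r ?mulrN ?mulNr ?opprK ?mulr1; by [left|right].
  apply: contra Cv => pos; rewrite inE; apply: connect_trans (connect1 (x := u) _).
    by rewrite inE in Cu.
  by rewrite /S_step auv.
by rewrite ltnNge; move: (bmax b' isT) => /= ->.
Qed.

Section Constr.
Variables (R : realFieldType) (n : nat) (adj : rel 'I_n) (sigma : 'I_n -> 'I_n -> R)
  (b : {ffun 'I_n -> bool}) (eps : R).

Definition good := S_step adj sigma (fb R b).
Definition wgt x y : R := if good x y then 1 else eps.
Definition Aof x y : R := if adj x y then - sigma x y * wgt x y else 0.
Definition dof x : R := - \sum_k Aof x k * fb R b x * fb R b k.
Definition Mof : 'M[R]_n := \matrix_(i, j) ((i == j)%:R * dof i + Aof i j).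
Definition Bof x y : R := - Aof x y * fb R b x * fb R b y.

Hypothesis sg : signed_graph adj sigma.

Lemma good_sym : symmetric good.
Proof.
case: sg => irr adjsym sigsym _ x y; rewrite /good /S_step adjsym.
case Axy: (adj y x) => //=.
by rewrite (sigsym y x) //; congr (_ < _); ring.
Qed.

Lemma Aof_sym x y : Aof x y = Aof y x.
Proof.
case: sg => irr adjsym sigsym _; rewrite /Aof /wgt adjsym good_sym.
by case Axy: (adj y x) => //; rewrite (sigsym x y) // adjsym.
Qed.

Lemma Mof_sym : Mof^T = Mof.
Proof.
apply/matrixP => i j; rewrite !mxE Aof_sym eq_sym.
by case: eqVneq => [->|]; rewrite ?mul0r.
Qed.

Lemma Mof_ker : Mof *m (\col_i fb R b i) = 0.
Proof.
apply/matrixP => i z; rewrite !mxE.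
rewrite (eq_bigr (fun j => (i == j)%:R * dof i * fb R b j + Aof i j * fb R b j)); last first.
  by move=> j _; rewrite !mxE mulrDl.
rewrite big_split /= (bigD1 i) //= big1 ?addr0; last first.
  by move=> j /negPf; rewrite eq_sym => ->; rewrite !mul0r.
rewrite eqxx mul1r /dof mulNr mulr_suml -sumrN -big_split /=.
apply: big1 => k _.
have h := fb_sq R b i.
rewrite -mulrA [fb R b i * _]mulrC mulrA -[X in - X + _]mulrA h mulr1 addNr //.
Qed.

Lemma quad_id (v : 'rV[R]_n) :
  2 * (v *m Mof *m v^T) 0 0 =
  \sum_x \sum_y Bof x y * (fb R b x * v 0 x - fb R b y * v 0 y) ^+ 2.
Proof.
pose G x y := - Aof x y * fb R b x * fb R b y * (v 0 x * v 0 x) + v 0 x * Aof x y * v 0 y.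
have e1 : (v *m Mof *m v^T) 0 0 = \sum_x \sum_y G x y.
  rewrite mxE; under eq_bigr => y _ do rewrite !mxE mulr_suml.
  rewrite exchange_big /=; apply: eq_bigr => x _.
  rewrite [RHS]big_split /= -[X in _ = X + _]mulr_suml.
  rewrite (eq_bigr (fun y => v 0 x * ((x == y)%:R * dof x) * v 0 y + v 0 x * Aof x y * v 0 y)); last first.
    by move=> y _; rewrite !mxE mulrDr mulrDl.
  rewrite big_split /= (bigD1 x) //= big1 ?addr0; last first.
    by move=> y /negPf; rewrite eq_sym => ->; rewrite mul0r mulr0 mul0r.
  rewrite eqxx mul1r /dof -sumrN mulr_sumr mulr_suml; congr (_ + _).
  rewrite mulr_suml; apply: eq_bigr => y _; ring.
have e2 : \sum_x \sum_y G x y = \sum_x \sum_y G y x by rewrite exchange_big.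
rewrite e1 (_ : 2 * _ = \sum_x \sum_y G x y + \sum_x \sum_y G y x); last first.
  by rewrite -e2 mulr_natl mulr2n.
rewrite -big_split; apply: eq_bigr => x _; rewrite -big_split; apply: eq_bigr => y _.
rewrite /G /Bof (Aof_sym y x) /fb; case: (b x); case: (b y); rewrite /=; ring.
Qed.

Hypothesis eps_gt0 : 0 < eps.

Lemma pm1_prod x y : adj x y -> fb R b x * sigma x y * fb R b y = 1 \/ fb R b x * sigma x y * fb R b y = -1.
Proof.
case: sg => _ _ _ pm /pm [] ->; rewrite /fb; case: (b x); case: (b y); rewrite /=;
  by [left; ring | right; ring].
Qed.

Lemma Bof_val x y : Bof x y = if good x y then 1 else if adj x y then - eps else 0.
Proof.
rewrite /Bof /Aof /wgt /good /S_step.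
case Axy: (adj x y) => /=; last by rewrite !oppr0 !mul0r.
have e : - (- sigma x y * (if 0 < fb R b x * sigma x y * fb R b y then 1 else eps)) * fb R b x * fb R b y
   = (fb R b x * sigma x y * fb R b y) * (if 0 < fb R b x * sigma x y * fb R b y then 1 else eps) by ring.
rewrite e; case: (pm1_prod Axy) => ->; rewrite ?ltr01 ?mul1r //.
by rewrite ltr0N1 mulN1r.
Qed.

Lemma compat_Mof : compatible adj sigma Mof.
Proof.
case: sg => irr adjsym sigsym pm; split.
  move=> i j ij; rewrite mxE (negPf ij) mul0r add0r /Aof.
  case Aij: (adj i j) => //=; last by rewrite eqxx.
  apply/idP; rewrite mulf_neq0 //.
    by case: (pm _ _ Aij) => ->; apply/eqP; lra.
  rewrite /wgt; case: (good i j); [exact: oner_neq0 | exact: lt0r_neq0].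
move=> i j Aij; have ij : i != j by apply/eqP => eij; move: Aij; rewrite eij (negPf (irr j)).
rewrite mxE (negPf ij) mul0r add0r /Aof Aij.
have wpos : 0 < wgt i j by rewrite /wgt; case: (good i j); rewrite ?ltr01.
rewrite normrM normrN (gtr0_norm wpos).
have -> : `|sigma i j| = 1 by case: (pm _ _ Aij) => ->; rewrite ?normrN normr1.
by rewrite mul1r !mulNr opprK mulrK // unitfE gt_eqF.
Qed.

End Constr.

Lemma path_dist (R : realDomainType) (T : finType) (e : rel T) (t : T -> R) D :
  (forall x y, e x y -> `|t x - t y| <= D) ->
  forall p x, path e x p -> `|t x - t (last x p)| <= (size p)%:R * D.
Proof.
move=> hD; elim => [|y p IH] x /=; first by rewrite subrr normr0 mul0r.
case/andP => exy pp; apply: le_trans (ler_distD (t y) _ _) _.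
rewrite -addn1 natrD mulrDl mul1r addrC lerD //; first exact: IH.
exact: hD.
Qed.

Lemma conn_dist (R : realDomainType) (T : finType) (e : rel T) (t : T -> R) D :
  (forall x y, e x y -> `|t x - t y| <= D) -> 0 <= D ->
  forall x y, connect e x y -> `|t x - t y| <= #|T|%:R * D.
Proof.
move=> hD D0 x y /connectP [p pp ->].
case: (shortenP pp) => p' pp' up' _.
apply: le_trans (path_dist hD pp') _; apply: ler_wpM2r => //.
rewrite ler_nat; have := card_uniqP up'; rewrite /= => /eqP.
move=> h; apply: leq_trans (leqnSn _) _.
have <- : #|x :: p'| = (size p').+1 by apply/eqP.
exact: max_card.
Qed.

Lemma le_sum_term (R : realDomainType) (I : finType) (F : I -> R) i0 :
  (forall i, 0 <= F i) -> F i0 <= \sum_i F i.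
Proof.
move=> h; rewrite (bigD1 i0) //= lerDl; apply: sumr_ge0 => i _; exact: h.
Qed.

Lemma quad_lower (R : realFieldType) n (adj : rel 'I_n.+1) sigma b (eps : R)
  (t : 'I_n.+1 -> R) :
  signed_graph adj sigma -> 0 < eps -> eps * (n.+1)%:R ^+ 4 = 2^-1 ->
  (forall x y, connect (good adj sigma b) x y) ->
  exists D, [/\ 0 <= D, forall x y, `|t x - t y| <= (n.+1)%:R * D &
   D ^+ 2 / 2 <= \sum_x \sum_y Bof adj sigma b eps x y * (t x - t y) ^+ 2].
Proof.
move=> sg eps0 epsN conn.
pose P (p : 'I_n.+1 * 'I_n.+1) := good adj sigma b p.1 p.2 || (p.1 == p.2).
pose F (p : 'I_n.+1 * 'I_n.+1) := `|t p.1 - t p.2|.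
have := @extremumP R _ (fun u w => w <= u) (ord0, ord0) P F.
case.
- by move=> u; exact: le_refl.
- by move=> u w z h1 h2; exact: le_trans h2 h1.
- by move=> u w; exact: le_total.
- by rewrite /P eqxx orbT.
move=> [a c] Pac Dmax.
set D := F (a, c).
have D0 : 0 <= D by rewrite /D /F normr_ge0.
have edge x y : good adj sigma b x y -> `|t x - t y| <= D.
  by move=> gxy; apply: (Dmax (x, y)); rewrite /P /= gxy.
have all2 x y : `|t x - t y| <= (n.+1)%:R * D.
  by have := conn_dist edge D0 (conn x y); rewrite card_ord.
exists D; split => //.
set K := (n.+1)%:R * D.
have term x y : (good adj sigma b x y)%:R * (t x - t y) ^+ 2 - eps * K ^+ 2
    <= Bof adj sigma b eps x y * (t x - t y) ^+ 2.
  have s0 : 0 <= (t x - t y) ^+ 2 by rewrite sqr_ge0.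
  have sK : (t x - t y) ^+ 2 <= K ^+ 2.
    rewrite -real_normK ?num_real //; apply: lerXn2r => //.
      by rewrite nnegrE normr_ge0.
    by rewrite nnegrE /K mulr_ge0.
  have eK : eps * (t x - t y) ^+ 2 <= eps * K ^+ 2 by rewrite ler_wpM2l // ltW.
  have eK0 : 0 <= eps * K ^+ 2 by rewrite mulr_ge0 ?sqr_ge0 // ltW.
  rewrite (Bof_val _ _ sg); case: (good _ _ _ x y) => /=.
    by rewrite mul1r lerBlDr lerDl.
  rewrite mul0r sub0r; case: (adj x y).
    by rewrite mulNr lerN2.
  by rewrite mul0r oppr_le0.
have S1 : \sum_x \sum_y ((good adj sigma b x y)%:R * (t x - t y) ^+ 2 - eps * K ^+ 2)
   <= \sum_x \sum_y Bof adj sigma b eps x y * (t x - t y) ^+ 2.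
  by apply: ler_sum => x _; apply: ler_sum => y _; apply: term.
have S2 : \sum_x \sum_y ((good adj sigma b x y)%:R * (t x - t y) ^+ 2 - eps * K ^+ 2)
   = \sum_x \sum_y (good adj sigma b x y)%:R * (t x - t y) ^+ 2 - (n.+1)%:R * ((n.+1)%:R * (eps * K ^+ 2)).
  under eq_bigr => x _ do rewrite sumrB sumr_const card_ord.
  by rewrite sumrB sumr_const card_ord !mulr_natl.
have S3 : D ^+ 2 <= \sum_x \sum_y (good adj sigma b x y)%:R * (t x - t y) ^+ 2.
  have nn : forall x y, 0 <= (good adj sigma b x y)%:R * (t x - t y) ^+ 2.
    by move=> x y; rewrite mulr_ge0 ?sqr_ge0 ?ler0n.
  have [eac|neac] := eqVneq a c.
    rewrite /D /F /= eac subrr normr0 expr0n /=.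
    by apply: sumr_ge0 => x _; apply: sumr_ge0 => y _; apply: nn.
  have gac : good adj sigma b a c by move: Pac; rewrite /P /= (negPf neac) orbF.
  apply: le_trans (le_sum_term a _) => /=; last first.
    by move=> x; apply: sumr_ge0 => y _; apply: nn.
  apply: le_trans (le_sum_term c _) => /=; last by move=> y; apply: nn.
  by rewrite gac mul1r /D /F /= real_normK // num_real.
have S4 : (n.+1)%:R * ((n.+1)%:R * (eps * K ^+ 2)) = D ^+ 2 / 2.
  rewrite /K -epsN; ring.
move: S1 S3; rewrite S2 S4.
set X := \sum_x \sum_y _; set Y := \sum_x \sum_y _; set Z := D ^+ 2.
lra.
Qed.

Lemma fb_neq0 (R : numDomainType) n (b : {ffun 'I_n -> bool}) x : fb R b x != 0.
Proof. by rewrite /fb; case: (b x); rewrite ?oppr_eq0 oner_eq0. Qed.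

Lemma sum_sq_gt0 (R : realDomainType) n (v : 'rV[R]_n) :
  v != 0 -> 0 < \sum_i v 0 i * v 0 i.
Proof.
move=> vn0.
have [i vi] : exists i, v 0 i != 0.
  apply/existsP; apply: contraNT vn0 => /existsPn h; apply/eqP/matrixP => a j.
  by rewrite (ord1 a) mxE; apply/eqP; move: (h j); rewrite negbK.
apply: lt_le_trans (le_sum_term (F := fun i => v 0 i * v 0 i) i _) => /=.
  by rewrite lt0r mulf_neq0 // -expr2 sqr_ge0.
by move=> j; rewrite -expr2 sqr_ge0.
Qed.


Unset Implicit Arguments. Set Strict Implicit.

Theorem theorem3p10 (R : realType) (n : nat) (adj : rel 'I_n)
  (sigma : 'I_n -> 'I_n -> R) :
  (0 < n)%N ->
  signed_graph adj sigma ->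
  connected_graph adj ->
  exists M : 'M[R]_n,
    [/\ symmetric_mx M, compatible adj sigma M &
      exists l1 : R,
        [/\ smallest_eigenvalue M l1, simple_eigenvalue M l1 &
          exists f1 : 'cV[R]_n,
            [/\ M *m f1 = l1 *: f1,
                forall x, f1 x 0 != 0,
                num_strong_nodal_domains adj sigma (fun x => f1 x 0) = 1%N &
                strong_nodal_domains adj sigma (fun x => f1 x 0)
                  = [set [set: 'I_n]]]]].
Proof.
case: n adj sigma => [//|n] adj sigma _ sg conn.
have [b hb] := good_signs sg conn.
pose eps : R := (2 * (n.+1)%:R ^+ 4)^-1.
have eps0 : 0 < eps by rewrite /eps invr_gt0 mulr_gt0 // exprn_gt0 // ltr0n.
have epsN : eps * (n.+1)%:R ^+ 4 = 2^-1.
  by rewrite /eps; field; rewrite addrC natr1 pnatr_eq0.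
pose M := Mof adj sigma b eps.
pose f1 : 'cV[R]_n.+1 := \col_i fb R b i.
have Mf1 : M *m f1 = 0 by apply: Mof_ker.
have hb' : forall x y, connect (good adj sigma b) x y := hb.
have quad (v : 'rV[R]_n.+1) : exists D, [/\ 0 <= D,
    forall x y, `|fb R b x * v 0 x - fb R b y * v 0 y| <= (n.+1)%:R * D &
    D ^+ 2 / 2 <= 2 * (v *m M *m v^T) 0 0].
  have [D [D0 h1 h2]] := quad_lower (fun x => fb R b x * v 0 x) sg eps0 epsN hb'.
  by exists D; split => //; rewrite quad_id.
exists M; split.
- exact: Mof_sym.
- exact: compat_Mof.
exists 0; split.
- split.
    apply/eigenvalueP; exists f1^T.
      have := congr1 trmx Mf1; rewrite trmx_mul trmx0 scale0r; move: (Mof_sym b eps sg); rewrite -/M => ->.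
      by [].
    apply/negP => /eqP /matrixP /(_ 0 0); rewrite !mxE => /eqP; exact/negP/fb_neq0.
  move=> l /eigenvalueP [v vM vn0].
  have [D [D0 _ h2]] := quad v.
  have : 0 <= (v *m M *m v^T) 0 0.
    have : 0 <= D ^+ 2 / 2 by rewrite mulr_ge0 ?sqr_ge0 // invr_ge0 ler0n.
    move=> h; have := le_trans h h2; rewrite pmulr_rge0 //.
  rewrite vM -scalemxAl mxE.
  have -> : (v *m v^T) 0 0 = \sum_i v 0 i * v 0 i by rewrite mxE; apply: eq_bigr => i _; rewrite mxE.
  by rewrite pmulr_lge0 // sum_sq_gt0.
- rewrite /simple_eigenvalue; apply: (mup_char_poly1 (g := f1)) => //.
    by rewrite mxE fb_neq0.
  move=> v vM vf.
  have [D [D0 h1 h2]] := quad v.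
  rewrite vM mul0mx mxE mulr0 in h2.
  have hD2 : D ^+ 2 <= 0 by lra.
  have : D ^+ 2 == 0 by rewrite eq_le hD2 sqr_ge0.
  rewrite sqrf_eq0 => /eqP Dz.
  pose c := fb R b ord0 * v 0 ord0.
  have tc x : fb R b x * v 0 x = c.
    by apply/eqP; rewrite -subr_eq0 -normr_le0; have := h1 x ord0; rewrite Dz mulr0.
  have vx x : v 0 x = fb R b x * c by rewrite -(tc x) mulrA fb_sq mul1r.
  have c0 : c = 0.
    have := congr1 (fun A : 'M[R]_1 => A 0 0) vf; rewrite !mxE.
    under eq_bigr => x _ do rewrite mxE vx mulrAC fb_sq mul1r.
    rewrite sumr_const card_ord => /eqP; rewrite mulrn_eq0 /= => /eqP //.
  by apply/matrixP => a x; rewrite (ord1 a) vx c0 mulr0 mxE.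
have eS : S_step adj sigma (fun x => f1 x 0) =2 good adj sigma b.
  by move=> x y; rewrite /S_step /good /S_step !mxE.
have SND : strong_nodal_domains adj sigma (fun x => f1 x 0) = [set [set: 'I_n.+1]].
  apply/setP => A; rewrite inE; apply/imsetP/eqP.
    move=> [x _ ->]; apply/setP => y; rewrite !inE /S_connected (eq_connect eS).
    exact: hb'.
  move=> ->; exists ord0; first by rewrite inE mxE fb_neq0.
  apply/setP => y; rewrite !inE /S_connected (eq_connect eS); symmetry; exact: hb'.
exists f1; split.
- by rewrite Mf1 scale0r.
- by move=> x; rewrite mxE fb_neq0.
- by rewrite /num_strong_nodal_domains SND cards1.
- exact: SND.
Qed.
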